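(* Let $J\ge2$ and let the configuration $\{(\iota_1,z_1^* ),\dots,(\iota_J,z_J^* )\}$ be non-degenerate. Then $|A^*\vec\lambda^D|\simeq\lambda_{\max}^D$ for all $\vec\lambda\in(0,\infty)^J$.
   Context: $N\ge7$, $D=\frac{N-2}2$. $\iota_i\in\{\pm1\}$, $z_1^*,\dots,z_J^*\in\mathbb{R}^N$ distinct. $A^*$ is the $J\times J$ matrix $A^*_{ij}=\mathbf 1_{i\ne j}\kappa_0\kappa_\infty\frac{\iota_i\iota_j}{|z_i^*-z_j^*|^{N-2}}$ with positive constants $\kappa_0=\frac{N-2}2\frac{\int W^{\frac{N+2}{N-2}}}{\int(x\cdot\nabla W+\frac{N-2}2W)^2}$, $\kappa_\infty=(N(N-2))^{\frac{N-2}2}$, $W(x)=(1+\frac{|x|^2}{N(N-2)})^{-\frac{N-2}2}$. Non-degenerate: $A^*$ has no nonzero kernel element in $[0,\infty)^J$. $\vec\lambda^D=(\lambda_1^D,\dots,\lambda_J^D)$, $\lambda_{\max}=\max_i\lambda_i$. Implicit constants may depend on $N$, $J$ and the configuration, not on $\vec\lambda$. *)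

(* Defs.v *)
From HB Require Import structures.
From mathcomp Require Import all_boot all_order all_algebra.
From mathcomp Require Import all_classical all_reals all_analysis.
Set Implicit Arguments. Unset Strict Implicit. Unset Printing Implicit Defensive.
Import Order.TTheory GRing.Theory Num.Theory.
Import numFieldNormedType.Exports.
Local Open Scope ring_scope.

Section Defs.
Variable R : realType.

(* Euclidean norm on R^N (the canonical norm on 'rV is the sup norm) *)
Definition enorm (n : nat) (x : 'rV[R]_n) : R := Num.sqrt (\sum_i x 0 i ^+ 2).

Definition enormc (n : nat) (v : 'cV[R]_n) : R := Num.sqrt (\sum_i v i 0 ^+ 2).

Definition Dexp (N : nat) : R := (N%:R - 2) / 2.

Definition Wbub (N : nat) (x : 'rV[R]_N) : R :=
  powR (1 + enorm x ^+ 2 / (N%:R * (N%:R - 2))) (- Dexp N).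

(* Iterated Lebesgue integral over R^n (Tonelli: for nonnegative measurable
   integrands it equals the Lebesgue integral over R^n). *)
Fixpoint iter_int (n : nat) (f : seq R -> \bar R) : \bar R :=
  match n with
  | 0 => f [::]
  | n'.+1 => (\int[@lebesgue_measure R]_(t in [set: R]) iter_int n' (fun s => f (t :: s)))%E
  end.

Definition integral_RN (N : nat) (f : 'rV[R]_N -> R) : \bar R :=
  iter_int N (fun s => (f (\row_i nth 0 s i))%:E).

(* kappa_0 = (N-2)/2 * int W^{(N+2)/(N-2)} / int (x.grad W + (N-2)/2 W)^2 ;
   x . grad W (x) is the directional derivative of W at x in direction x. *)
Definition kappa0 (N : nat) : R :=
  Dexp N *
  fine (integral_RN (fun x : 'rV[R]_N => powR (Wbub x) ((N%:R + 2) / (N%:R - 2)))) /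
  fine (integral_RN (fun x : 'rV[R]_N => (derive (@Wbub N) x x + Dexp N * Wbub x) ^+ 2)).

Definition kappa_inf (N : nat) : R := powR (N%:R * (N%:R - 2)) (Dexp N).

Definition Astar (N J : nat) (iota : 'I_J -> R) (z : 'I_J -> 'rV[R]_N) : 'M[R]_J :=
  \matrix_(i, j) (if i == j then 0
                 else kappa0 N * kappa_inf N * (iota i * iota j) /
                      enorm (z i - z j) ^+ (N - 2)).

Definition nondegenerate_config (N J : nat) (iota : 'I_J -> R) (z : 'I_J -> 'rV[R]_N) : Prop :=
  forall v : 'cV[R]_J, (forall i, 0 <= v i 0) -> Astar iota z *m v = 0 -> v = 0.

Definition lamD (N J : nat) (lam : 'I_J -> R) : 'cV[R]_J :=
  \col_i powR (lam i) (Dexp N).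

Definition lam_max (J : nat) (lam : 'I_J -> R) : R := \big[Num.max/0]_i lam i.

End Defs.

(* Main.v *)
Require Import Defs.
From HB Require Import structures.
From mathcomp Require Import all_boot all_order all_algebra.
From mathcomp Require Import all_classical all_reals all_analysis.
Import Order.TTheory GRing.Theory Num.Theory.
Import numFieldNormedType.Exports.
Local Open Scope classical_set_scope.
Local Open Scope ring_scope.

Section Aux.
Variable R : realType.
Variable J : nat.
Variable M : 'M[R]_J.

Definition hh (i : 'I_J) (u : 'rV[R]_J) : R := \sum_j M i j * u 0 j.
Definition gg (u : 'rV[R]_J) : R := \sum_i (hh i u * hh i u).

Lemma hh_cont i : continuous (hh i).
Proof.
rewrite /hh.
apply: (@continuous_big _ _ +%R 0 xpredT add_continuous) => j _.
move=> x; apply: (continuousM (s:=fun=> M i j) (t:=fun u : 'rV[R]_J => u 0 j)).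
  exact: cst_continuous.
exact: coord_continuous.
Qed.

Lemma gg_cont : continuous gg.
Proof.
rewrite /gg.
apply: (@continuous_big _ _ +%R 0 xpredT add_continuous) => i _.
move=> x; apply: (continuousM (s:=hh i) (t:=hh i)); exact: hh_cont.
Qed.

Definition Aset : set 'rV[R]_J :=
  [set v | forall i, `[0, 1]%classic (v 0 i)] `&` [set v | 1 <= \sum_i v 0 i].

Lemma Aset_compact : compact Aset.
Proof.
apply: compact_closedI.
  exact: (@rV_compact _ J (fun=> `[(0:R), 1]%classic) (fun=> @segment_compact R 0 1)).
have cs : continuous (fun v : 'rV[R]_J => \sum_i v 0 i).
  apply: (@continuous_big _ _ +%R 0 xpredT add_continuous) => i _.
  exact: coord_continuous.
exact: (proj1 (continuous_closedP _) cs _ (@closed_ge R 1)).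
Qed.

End Aux.
Arguments gg {R J} M u.
Arguments hh {R J} M i u.
Arguments Aset {R J}.
Theorem lemma4p1 (R : realType) (N J : nat) (iota : 'I_J -> R) (z : 'I_J -> 'rV[R]_N) :
  (7 <= N)%N -> (2 <= J)%N ->
  (forall i, iota i = 1 \/ iota i = -1) ->
  injective z ->
  nondegenerate_config iota z ->
  exists c C : R, 0 < c /\ 0 < C /\
    forall lam : 'I_J -> R, (forall i, 0 < lam i) ->
      c * powR (lam_max lam) (Dexp R N) <= enormc (Astar iota z *m lamD N lam) /\
      enormc (Astar iota z *m lamD N lam) <= C * powR (lam_max lam) (Dexp R N).
Proof.
move=> N7 J2 _ _ nd.
set M := Astar iota z.
have gge0 : forall u, 0 <= gg M u.
  by move=> u; apply: sumr_ge0 => i _; rewrite -expr2 sqr_ge0.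
have A0 : (@Aset R J) !=set0.
  exists (const_mx 1); split.
    by move=> i; rewrite mxE /= in_itv /= ler01 lexx.
  rewrite /=; under eq_bigr do rewrite mxE.
  rewrite sumr_const card_ord.
  by rewrite -[X in X <= _]mulr1n ler_pMn2l ?ltr01 // ltnW.
have cg : {within (@Aset R J), continuous gg M}.
  by apply: continuous_subspaceT; exact: gg_cont.
have [cm cmA cmP] := EVT_min_rV A0 (@Aset_compact R J) cg.
have [cM cMA cMP] := EVT_max_rV A0 (@Aset_compact R J) cg.
have gpos : 0 < gg M cm.
  rewrite lt_def gge0 andbT; apply/eqP => g0.
  move: cmA; rewrite inE => -[cm01 cm1].
  have h0 : forall i, hh M i cm = 0.
    move=> i; have := psumr_eq0P _ g0 (i:=i) isT.
    by move=> /(_ _) /eqP; rewrite mulf_eq0 orbb => /(_ _) /eqP; apply => j _; rewrite -expr2 sqr_ge0.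
  have : cm^T = 0.
    apply: nd.
      by move=> i; rewrite mxE; have := cm01 i; rewrite /= in_itv /= => /andP[].
    apply/matrixP => i j; rewrite !mxE (ord1 j) -[RHS](h0 i).
    rewrite /hh /M; apply: eq_bigr => k0 _; by rewrite [cm^T _ _]mxE.
  move=> cm0; move: cm1 => /=; have -> : \sum_i cm 0 i = 0.
    by apply: big1 => i _; have := congr1 (fun A : 'cV[R]_J => A i 0) cm0; rewrite !mxE.
  by rewrite ler10.
exists (Num.sqrt (gg M cm)), (Num.sqrt (gg M cM) + 1).
split; first by rewrite sqrtr_gt0.
split; first by rewrite ltr_pwDr ?ltr01 ?sqrtr_ge0.
move=> lam lam0.
have D0 : 0 <= Dexp R N.
  rewrite /Dexp divr_ge0 // subr_ge0.
  by rewrite -[2]/(2%:R) ler_nat (leq_trans _ N7).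
pose i0 : 'I_J := Ordinal (ltnW J2).
set m := lam_max lam.
set k := [arg max_(i > i0) lam i]%O.
have mk : m = lam k.
  by rewrite /m /lam_max (bigmax_eq_arg _ i0) // => i _; apply: ltW.
have lem : forall i, lam i <= m.
  by move=> i; rewrite /m /lam_max; apply: le_bigmax.
set a := powR m (Dexp R N).
have apos : 0 < a by rewrite /a mk powR_gt0.
set u : 'rV[R]_J := \row_j (powR (lam j) (Dexp R N) / a).
have uA : u \in Aset.
  rewrite inE; split => [i|] /=.
    rewrite mxE in_itv /= divr_ge0 ?powR_ge0 ?(ltW apos) //= ler_pdivrMr // mul1r /a.
  
    by apply: (ge0_ler_powR D0); [rewrite nnegrE ltW //| rewrite nnegrE mk ltW // | exact: lem].
  rewrite (bigD1 k) //= mxE /a -mk divff ?gt_eqF // lerDl sumr_ge0 // => i _.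
  by rewrite mxE divr_ge0 ?powR_ge0 ?ltW.
have key : enormc (M *m lamD N lam) = a * Num.sqrt (gg M u).
  rewrite /enormc -[a in RHS]ger0_norm ?ltW // -sqrtr_sqr -sqrtrM ?sqr_ge0 //.
  congr Num.sqrt; rewrite /gg mulr_sumr; apply: eq_bigr => i _.
  rewrite /hh -expr2 -exprMn mulr_sumr mxE; congr (_ ^+ 2); apply: eq_bigr => j _.
  by set Mij := M i j; rewrite !mxE [RHS]mulrCA [a * (_ / _)]mulrCA mulfV ?gt_eqF // mulr1.
rewrite key; split.
  rewrite [_ * a]mulrC ler_wpM2l ?(ltW apos) //; apply: ler_wsqrtr; exact: cmP.
rewrite [_ * a]mulrC ler_wpM2l ?(ltW apos) //; apply: (le_trans (ler_wsqrtr (cMP _ uA))).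
by rewrite lerDl ler01.
Qed.
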